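(* Let $N\ge 3$ be even, $K>0$ and $0<P\le 2K$. Consider the equations for phase differences $\theta_1,\dots,\theta_N$ of a ring network with homogeneous power distribution $P_i=(-1)^{i+1}P$: \[ \sin\theta_i-\sin\theta_{i+1}=\frac{P_i}{K}\quad (i=1,\dots,N,\ \theta_{N+1}=\theta_1),\qquad \sum_{i=1}^N\theta_i=2m\pi\ \text{ for some } m\in\{-\lfloor N/2\rfloor,\dots,\lfloor N/2\rfloor\}. \] The total number of stable equilibria, i.e. solutions with all $\theta_i\in[-\pi/2,\pi/2]$, is \[ N_s=1+2\Big\lfloor \frac{N}{2\pi}\arccos\Big(\sqrt{\frac{P}{2K}}\Big)\Big\rfloor . \]
   Context: These equations describe the equilibria $(\boldsymbol\delta,\mathbf 0)$ of the ring swing-equation system $\ddot\delta_i+\alpha\dot\delta_i+K[\sin(\delta_i-\delta_{i+1})+\sin(\delta_i-\delta_{i-1})]=P_i$ (indices mod $N$) in terms of the phase differences $\theta_1=\delta_1-\delta_N$, $\theta_i=\delta_i-\delta_{i-1}$ (mod $2\pi$). $\lfloor x\rfloor$ denotes the largest integer not exceeding $x$. *)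

(* Defs.v *)
From HB Require Import structures.
From mathcomp Require Import all_boot all_order all_algebra.
From mathcomp Require Import all_classical all_reals all_analysis.
Set Implicit Arguments. Unset Strict Implicit. Unset Printing Implicit Defensive.
Import Order.TTheory GRing.Theory Num.Theory.
Local Open Scope ring_scope.

(* Index i = 1..N of the paper is represented by j : 'I_N with i = j+1.
   theta_{i+1} (cyclic, theta_{N+1} = theta_1) is theta (ordS j). *)

Definition Pdist {R : realType} (N : nat) (P : R) (j : 'I_N) : R :=
  (-1) ^+ (nat_of_ord j) * P.

Definition ring_eq {R : realType} (N : nat) (K P : R) (theta : 'I_N -> R) : Prop :=
  (forall j : 'I_N, sin (theta j) - sin (theta (ordS j)) = Pdist P j / K) /\
  exists m : int, - ((N./2)%:Z) <= m <= (N./2)%:Z /\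
    \sum_(j < N) theta j = 2 * m%:~R * pi.

Definition stable_eq {R : realType} (N : nat) (K P : R) (theta : 'I_N -> R) : Prop :=
  ring_eq K P theta /\ forall j : 'I_N, - (pi / 2) <= theta j <= pi / 2.

(* Main.v *)
Require Import Defs.
From HB Require Import structures.
From mathcomp Require Import all_boot all_order all_algebra.
From mathcomp Require Import all_classical all_reals all_analysis.
From mathcomp Require Import ring lra.
Import Order.TTheory GRing.Theory Num.Theory.
Local Open Scope ring_scope.

Section Aux.
Context {R : realType}.
Implicit Types x y u d a b r s : R.

Lemma sin_half_id u d : sin (u + d) - sin (u - d) = 2 * cos u * sin d.
Proof. rewrite sinD sinB; ring. Qed.

Lemma sin_pihalfB x : sin (pi / 2 - x) = cos x.
Proof. rewrite sinB sin_pihalf cos_pihalf; ring. Qed.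

Lemma ler_sin' x y : -(pi/2) <= x <= pi/2 -> -(pi/2) <= y <= pi/2 ->
  (sin x <= sin y) = (x <= y).
Proof. by move=> hx hy; rewrite !leNgt ltr_sin // in_itv /= ?hx ?hy. Qed.

Lemma ltr_sin' x y : -(pi/2) <= x <= pi/2 -> -(pi/2) <= y <= pi/2 ->
  (sin x < sin y) = (x < y).
Proof. by move=> hx hy; rewrite ltr_sin // in_itv /= ?hx ?hy. Qed.

Lemma ler_cos' x y : 0 <= x <= pi -> 0 <= y <= pi ->
  (cos x <= cos y) = (y <= x).
Proof. by move=> hx hy; rewrite !leNgt ltr_cos // in_itv /= ?hx ?hy. Qed.

Lemma acos_bnd s : 0 <= s <= 1 -> 0 <= acos s <= pi.
Proof.
move=> /andP[h0 h1]; have hs : -1 <= s <= 1 by apply/andP; split => //; lra.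
by rewrite acos_ge0 // acos_lepi.
Qed.

Lemma cosacos s : 0 <= s <= 1 -> cos (acos s) = s.
Proof. move=> /andP[h0 h1]; rewrite acosK // in_itv /=; apply/andP; split => //; lra. Qed.

Lemma acos_le_pihalf s : 0 <= s <= 1 -> acos s <= pi / 2.
Proof.
move=> hs; have hp := pi_gt0 R.
rewrite -ler_cos' ?cos_pihalf ?cosacos ?acos_bnd //; first by case/andP: hs.
apply/andP; split; lra.
Qed.

Lemma cos_acos_le s u : 0 <= s <= 1 -> `|u| <= pi ->
  (`|u| <= acos s) = (s <= cos u).
Proof.
move=> hs hu.
transitivity (cos (acos s) <= cos `|u|).
  by rewrite ler_cos' ?acos_bnd // normr_ge0.
by rewrite cosacos // cos_norm.
Qed.

Lemma norm_bnd u : -`|u| <= u <= `|u|.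
Proof. by rewrite -ler_norml. Qed.

Lemma fwd r u : 0 < r <= 1 -> `|u| <= pi/2 -> Num.sqrt r <= cos u ->
  [/\ -(pi/2) <= u + asin (r / cos u) <= pi/2,
      -(pi/2) <= u - asin (r / cos u) <= pi/2 &
      sin (u + asin (r / cos u)) - sin (u - asin (r / cos u)) = 2 * r].
Proof.
move=> /andP[hr0 hr1] hu hsc.
have hp := pi_gt0 R.
have hs0 : 0 < Num.sqrt r by rewrite sqrtr_gt0.
have hss : Num.sqrt r ^+ 2 = r by rewrite sqr_sqrtr // ltW.
set c := cos u in hsc *.
have hc : 0 < c by lra.
have hrc : r <= c * c by nra.
set q := r / c.
have hq0 : 0 < q by rewrite divr_gt0.
have hqc : q <= c by rewrite ler_pdivrMr.
have hc1 : c <= 1 by apply: cos_le1.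
have hq : -1 <= q <= 1 by apply/andP; split; lra.
set d := asin q.
have hsd : sin d = q by rewrite /d asinK // in_itv /= hq.
have hd : -(pi/2) <= d <= pi/2 by rewrite asin_geNpi2 // asin_lepi2.
have hd0 : 0 < d.
  rewrite -(ltr_sin' 0 d) ?sin0 ?hsd //; apply/andP; split; lra.
have nu := norm_bnd u.
have hn0 : 0 <= `|u| := normr_ge0 u.
have hdu : d <= pi/2 - `|u|.
  rewrite -ler_sin' // ?sin_pihalfB ?cos_norm ?hsd //; apply/andP; split; lra.
split.
- apply/andP; split; lra.
- apply/andP; split; lra.
- rewrite sin_half_id hsd /q /c; field; by rewrite gt_eqF.
Qed.

Lemma bwd r a b : 0 < r -> -(pi/2) <= a <= pi/2 -> -(pi/2) <= b <= pi/2 ->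
  sin a - sin b = 2 * r ->
  [/\ `|(a + b) / 2| <= pi/2, Num.sqrt r <= cos ((a + b) / 2) &
      asin (r / cos ((a + b) / 2)) = (a - b) / 2].
Proof.
move=> hr ha hb.
have hp := pi_gt0 R.
set u := (a + b) / 2; set d := (a - b) / 2.
have ea : a = u + d by rewrite /u /d; field.
have eb : b = u - d by rewrite /u /d; field.
rewrite [in sin a]ea [in sin b]eb sin_half_id => hsin.
move: ha hb; rewrite ea eb => ha hb.
have hu : `|u| <= pi / 2 by rewrite ler_norml; apply/andP; split; lra.
have hc0 : 0 <= cos u by apply: cos_ge0_pihalf; rewrite -ler_norml.
have hcs : cos u * sin d = r by lra.
have hc : 0 < cos u.
  rewrite lt_neqAle hc0 andbT; apply/eqP => e; rewrite -e mul0r in hcs; lra.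
have hsd : sin d = r / cos u by rewrite -hcs; field; rewrite gt_eqF.
have hd : -(pi/2) <= d <= pi/2 by apply/andP; split; lra.
have hud : `|u| + d <= pi / 2.
  by case: (lerP 0 u) => h; [rewrite ger0_norm // | rewrite ltr0_norm //]; lra.
have hn0 : 0 <= `|u| := normr_ge0 u.
have hsdc : sin d <= cos u.
  rewrite -cos_norm -sin_pihalfB ler_sin' //; first lra.
  apply/andP; split; lra.
split => //.
- have hss : Num.sqrt r ^+ 2 = r by rewrite sqr_sqrtr // ltW.
  have hs0 : 0 <= Num.sqrt r by apply: sqrtr_ge0.
  have : r <= cos u * cos u by rewrite -hcs ler_wpM2l.
  nra.
- by rewrite -hsd sinK // in_itv /= hd.
Qed.

Lemma sum_alt n a b : ~~ odd n ->
  \sum_(j < n) (if odd j then b else a) = (n./2)%:R * (a + b).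
Proof.
move=> hn; have [h ->] : exists h, n = h.*2 by exists n./2; rewrite even_halfK.
rewrite doubleK; elim: h => [|h IH].
  by rewrite big_ord0 mul0r.
rewrite doubleS !big_ord_recr /= IH odd_double /= -natr1; ring.
Qed.

End Aux.
Arguments acos_le_pihalf {R s}.
Arguments acos_bnd {R s}.
Arguments fwd {R r u}.
Arguments bwd {R r a b}.

Lemma odd_ordS N (j : 'I_N) : ~~ odd N -> odd (ordS j) = ~~ odd j.
Proof.
move=> hN; rewrite /ordS /=.
case: (ltnP j.+1 N) => h; first by rewrite modn_small.
have e : j.+1 = N by apply/eqP; rewrite eqn_leq h ltn_ord.
have -> : (j.+1 %% N = 0)%N by rewrite e modnn.
have : odd j.+1 = odd N by rewrite e.
by rewrite /= (negbTE hN) => /negbFE ->.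
Qed.

Lemma sin_alt (R : realType) N (K P : R) (th : 'I_N -> R) (h0 : (0 < N)%N) :
  ring_eq K P th -> forall n (hn : (n < N)%N),
  sin (th (Ordinal hn)) = sin (th (Ordinal h0)) - (odd n)%:R * (P / K).
Proof.
case=> heq _; elim=> [|n IH] hn.
  have -> : Ordinal hn = Ordinal h0 by apply: val_inj.
  by rewrite /= mul0r subr0.
have hn' : (n < N)%N by apply: ltnW.
have := heq (Ordinal hn').
have -> : ordS (Ordinal hn') = Ordinal hn by apply: val_inj; rewrite /= modn_small.
rewrite (IH hn') /Pdist /= -signr_odd.
case ho : (odd n) => /=; rewrite ?expr1 ?expr0 ?mulN1r ?mul1r ?mulNr;
  set p := P / K; lra.
Qed.

Lemma alt_theta (R : realType) N (K P : R) (th : 'I_N -> R) (h0 : (0 < N)%N)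
  (h1 : (1 < N)%N) :
  stable_eq K P th -> forall j, th j = if odd j then th (Ordinal h1) else th (Ordinal h0).
Proof.
case=> hr hb j.
have hj : j = Ordinal (ltn_ord j) by apply: val_inj.
have e := @sin_alt _ _ _ _ _ h0 hr _ (ltn_ord j).
have e1 := @sin_alt _ _ _ _ _ h0 hr _ h1.
rewrite -hj in e.
apply: sin_inj; rewrite ?in_itv /= ?hb //; first by case: ifP.
rewrite e; case: ifP => /= _; rewrite ?e1 //; set p := P / K; lra.
Qed.

Ltac fieldpi R := let q := fresh "q" in let hq := fresh "hq" in
  move: (@pi_gt0 R); generalize (@pi R) => q hq; field;
  rewrite ?(gt_eqF hq) ?andbT ?andTb /=.

Theorem proposition1 (R : realType) (N : nat) (K P : R) :
  (3 <= N)%N -> ~~ odd N -> 0 < K -> 0 < P -> P <= 2 * K ->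
  exists (Ns : nat) (f : 'I_Ns -> ('I_N -> R)),
    injective f /\
    (forall theta : 'I_N -> R, stable_eq K P theta <-> exists k, f k = theta) /\
    Ns%:Z = 1 + 2 * Num.floor (N%:R / (2 * pi) * acos (Num.sqrt (P / (2 * K)))).
Proof.
move=> hN3 hNe hK hP hPK.
have hp := pi_gt0 R.
have hN0 : (0 < N)%N by apply: leq_trans hN3.
have hN1 : (1 < N)%N by apply: leq_trans hN3.
have hNr : 0 < N%:R :> R by rewrite ltr0n.
have eN : N%:R = 2 * (N./2)%:R :> R.
  by rewrite -[in LHS](even_halfK hNe) -muln2 natrM mulrC.
have hh : (N./2)%:R != 0 :> R by apply/eqP => e; rewrite e mulr0 in eN; lra.
set r := P / (2 * K).
have e2r : P / K = 2 * r by rewrite /r; field; rewrite gt_eqF.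
have hr0 : 0 < r by rewrite divr_gt0 // mulr_gt0.
have hr : 0 < r <= 1.
  by rewrite hr0 /= ler_pdivrMr ?mul1r // mulr_gt0.
set s := Num.sqrt r.
have hs : 0 <= s <= 1.
  have hs0 : 0 <= s by apply: sqrtr_ge0.
  have hss : s ^+ 2 = r by rewrite sqr_sqrtr // ltW.
  apply/andP; split => //; nra.
set al := acos s.
have hal : 0 <= al <= pi / 2 by rewrite (acos_le_pihalf hs) andbT; case/andP: (acos_bnd hs).
set X := N%:R / (2 * pi) * al.
have hX : 0 <= X.
  by rewrite mulr_ge0 ?divr_ge0 ?ler0n ?mulr_ge0 //; [lra | case/andP: hal].
set M := Num.floor X.
have hM : 0 <= M by rewrite floor_ge0.
pose uf (m : int) : R := m%:~R * (2 * pi / N%:R).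
have hc : 0 < 2 * pi / N%:R :> R by apply: divr_gt0 => //; apply: mulr_gt0.
pose th (m : int) : 'I_N -> R := fun j =>
  if odd j then uf m - asin (r / cos (uf m)) else uf m + asin (r / cos (uf m)).
have key : forall m : int, (`|m| <= M) = (`|uf m| <= al).
  move=> m; rewrite /M floor_ge_int intr_norm /uf normrM (ger0_norm (ltW hc)).
  rewrite -ler_pdivlMr //; congr (_ <= _); rewrite /X; fieldpi R.
  by rewrite (gt_eqF hNr).
have MX : M%:~R <= X by rewrite -floor_ge_int.
have Mle : M <= (N./2)%:Z.
  rewrite -(ler_int R); apply: (le_trans MX).
  have -> : X = (N./2)%:R * (al / pi) by rewrite /X eN; fieldpi R; rewrite ?hh.
  have ha1 : al / pi <= 1 by rewrite ler_pdivrMr // mul1r; lra.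
  have ha0 : 0 <= al / pi by rewrite divr_ge0 //; lra.
  have : 0 <= (N./2)%:R :> R by rewrite ler0n.
  rewrite /intmul /=; nra.
set Ns := `|(1 + 2 * M)%R|%N.
have hNs : Ns%:Z = 1 + 2 * M by rewrite gez0_abs // addr_ge0 // mulr_ge0.
have hfwd : forall m : int, `|m| <= M -> stable_eq K P (th m).
  move=> m hm.
  have hu : `|uf m| <= al by rewrite -key.
  have hu2 : `|uf m| <= pi / 2 by lra.
  have hsc : s <= cos (uf m) by rewrite -cos_acos_le //; lra.
  case: (fwd hr hu2 hsc) => ha hb hsin.
  split; [split|].
  - move=> j; rewrite /th /Pdist odd_ordS // -signr_odd.
    case: (odd j) => /=; rewrite ?expr1 ?expr0 ?mulN1r ?mul1r ?mulNr e2r //; lra.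
  - exists m; split.
      by rewrite -ler_norml (le_trans hm).
    by rewrite /th sum_alt // /uf eN; fieldpi R; rewrite ?hh.
  - by move=> j; rewrite /th; case: (odd j).
exists Ns, (fun k : 'I_Ns => th (k%:Z - M)); split; last split.
- move=> k1 k2 e.
  have e0 := congr1 (fun f => f (Ordinal hN0)) e.
  have e1 := congr1 (fun f => f (Ordinal hN1)) e.
  rewrite /th /= in e0 e1.
  have : uf (k1%:Z - M) = uf (k2%:Z - M) by lra.
  move/(mulIf (negbT (gt_eqF hc)))/intr_inj/addIr => [] ek; exact: val_inj.
- move=> theta; split.
  + move=> hst.
    have hth := @alt_theta _ _ _ _ _ hN0 hN1 hst.
    case: hst => [[heq [m [hmb hsum]]] hbd].
    set a := theta (Ordinal hN0); set b := theta (Ordinal hN1).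
    have hab : sin a - sin b = 2 * r.
      have := heq (Ordinal hN0).
      have -> : ordS (Ordinal hN0) = Ordinal hN1 by apply: val_inj; rewrite /= modn_small.
      by rewrite /Pdist /= expr0 mul1r e2r.
    case: (bwd hr0 (hbd _) (hbd _) hab) => hu hsc has.
    have hsum' : \sum_(j < N) theta j = (N./2)%:R * (a + b).
      by rewrite (eq_bigr _ (fun j _ => hth j)) sum_alt.
    rewrite hsum' in hsum.
    have eab : a + b = 2 * m%:~R * pi / (N./2)%:R by rewrite -hsum; field; rewrite hh.
    have eu : (a + b) / 2 = uf m by rewrite eab /uf eN; fieldpi R; rewrite ?hh.
    have hmM : `|m| <= M by rewrite key -eu cos_acos_le //; lra.
    have hmM' := hmM; rewrite ler_norml in hmM'.
    have hk0 : 0 <= m + M by lra.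
    have hk : (`|(m + M)%R| < Ns)%N by rewrite -ltz_nat hNs gez0_abs //; lra.
    exists (Ordinal hk); apply: funext => j /=.
    rewrite gez0_abs // addrK hth /th -eu has.
    by rewrite /a /b; case: (odd j) => /=; field.
  + case=> k <-; apply: hfwd.
    have hk := ltn_ord k; rewrite -ltz_nat hNs in hk.
    have k0 : 0 <= k%:Z :> int by [].
    rewrite addrC ltzD1 in hk.
    rewrite ler_norml; apply/andP; split; lra.
- exact: hNs.
Qed.
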